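(* Let $t\in[0,1)$, $\tilde r,\tilde c\in\tilde\Delta_n$ with strictly positive entries, and $\tilde P_\circ\in\mathbb{R}^{n\times n}_{\ge0}$. (a) If every row of $\tilde P_\circ$ is nonzero, the row projection $\min\{D_t(\tilde P\|\tilde P_\circ):\tilde P\in\mathbb{R}^{n\times n}_{\ge0},\ \tilde P^{1/t^*}\mathbf 1_n=\tilde r^{1/t^*}\}$ is attained at $$\tilde P=\mathrm{diag}(\tilde r/\tilde\mu)\,\tilde P_\circ,\qquad \tilde\mu=\big(\tilde P_\circ^{1/t^*}\mathbf 1_n\big)^{t^*}.$$ (b) If every column of $\tilde P_\circ$ is nonzero, the column projection $\min\{D_t(\tilde P\|\tilde P_\circ):\tilde P\in\mathbb{R}^{n\times n}_{\ge0},\ (\tilde P^{1/t^*})^\top\mathbf 1_n=\tilde c^{1/t^*}\}$ is attained at $$\tilde P=\tilde P_\circ\,\mathrm{diag}(\tilde c/\tilde\xi),\qquad \tilde\xi=\big((\tilde P_\circ^{1/t^*})^\top\mathbf 1_n\big)^{t^*}.$$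
   Context: $t^*=1/(2-t)$; all powers and the division $\tilde r/\tilde\mu$ are entrywise; $\mathbf 1_n$ is the all-ones vector. For $s\ne1$, $\log_s(z)=(z^{1-s}-1)/(1-s)$. Co-simplex $\tilde\Delta_n=\{\tilde p\in\mathbb{R}^n:\tilde p\ge0,\ \sum_i\tilde p_i^{1/t^*}=1\}$. Tempered relative entropy $D_t(\tilde u\|\tilde v)=\sum_k[\tilde u_k(\log_t\tilde u_k-\log_t\tilde v_k)-\log_{t-1}\tilde u_k+\log_{t-1}\tilde v_k]$ (sum over all entries). *)

(* Defs.v *)
From HB Require Import structures.
From mathcomp Require Import all_boot all_order all_algebra.
From mathcomp Require Import reals exp.
Set Implicit Arguments. Unset Strict Implicit. Unset Printing Implicit Defensive.
Import Order.TTheory GRing.Theory Num.Theory.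
Local Open Scope ring_scope.

Section TemperedDefs.
Variable R : realType.

Definition tstar (t : R) : R := (2 - t)^-1.

(* tempered logarithm log_s(z) = (z^{1-s} - 1)/(1 - s), s <> 1;
   real powers via powR (with 0 `^ a = 0 for a <> 0). *)
Definition logt (s z : R) : R := (powR z (1 - s) - 1) / (1 - s).

Definition mpow m n (A : 'M[R]_(m, n)) (a : R) : 'M[R]_(m, n) :=
  map_mx (fun x => powR x a) A.

Definition Dt (t : R) n (U V : 'M[R]_n) : R :=
  \sum_(i < n) \sum_(j < n)
    (U i j * (logt t (U i j) - logt t (V i j))
     - logt (t - 1) (U i j) + logt (t - 1) (V i j)).

Definition cosimplex (t : R) n (p : 'cV[R]_n) : Prop :=
  (forall i, 0 <= p i 0) /\ \sum_(i < n) powR (p i 0) (tstar t)^-1 = 1.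

Definition nonneg_mx n (P : 'M[R]_n) : Prop := forall i j, 0 <= P i j.

Definition ones n : 'cV[R]_n := const_mx 1.

Definition is_argmin (T : Type) (S : T -> Prop) (f : T -> R) (x : T) : Prop :=
  S x /\ forall y, S y -> f x <= f y.

End TemperedDefs.

(* Main.v *)
Require Import Defs.
From HB Require Import structures.
From mathcomp Require Import all_boot all_order all_algebra.
From mathcomp Require Import reals exp.
From mathcomp Require Import ring lra.
Import Order.TTheory GRing.Theory Num.Theory.
Local Open Scope ring_scope.

Set Implicit Arguments.
Section H.
Variable R : realType.

Definition F (a u v : R) : R :=
  powR u a / (a * (a - 1)) - u * powR v (a - 1) / (a - 1) + powR v a / a.

Lemma term_eq (t u v : R) : 0 <= t -> t < 1 -> 0 <= u -> 0 <= v ->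
  u * (logt t u - logt t v) - logt (t - 1) u + logt (t - 1) v = F (2 - t) u v.
Proof.
move=> t0 t1 u0 v0.
rewrite /logt /F.
have -> : 1 - (t - 1) = 2 - t by ring.
have -> : 2 - t - 1 = 1 - t by ring.
have e : u * powR u (1 - t) = powR u (2 - t).
  have -> : 1 - t = (2 - t) - 1 by ring.
  by rewrite mulr_powRB1 //; lra.
have h1 : 1 - t != 0 by apply/eqP; lra.
have h2 : 2 - t != 0 by apply/eqP; lra.
rewrite -e; field.
by rewrite h1 h2.
Qed.


Lemma pow_lam (a rho S : R) : 1 < a -> 0 < rho -> 0 < S ->
  powR (rho / powR S a^-1) a = powR rho a / S.
Proof.
move=> a1 rho0 S0.
have a0 : a != 0 by apply/eqP; lra.
have ag0 : 0 < a by lra.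
have pS : 0 < powR S a^-1 by rewrite powR_gt0.
rewrite powRM ?ltW ?invr_gt0 // -powRN -powRrM mulNr mulVf //.
by rewrite powR_inv1 ?ltW.
Qed.

Lemma row_sum_lam n (a rho : R) (v : 'I_n -> R) : 1 < a -> 0 < rho ->
  (forall j, 0 <= v j) -> 0 < \sum_j powR (v j) a ->
  \sum_j powR (rho / powR (\sum_j powR (v j) a) a^-1 * v j) a = powR rho a.
Proof.
move=> a1 rho0 v0 S0; set S := \sum_j _ in S0 *.
have pS : 0 < powR S a^-1 by rewrite powR_gt0.
have lam0 : 0 <= rho / powR S a^-1 by rewrite divr_ge0 ?ltW.
under eq_bigr => j _ do rewrite powRM //.
by rewrite -mulr_sumr pow_lam // -/S divfK // gt_eqF.
Qed.

Lemma row_opt n (a rho : R) (u v : 'I_n -> R) : 1 < a -> 0 < rho ->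
  (forall j, 0 <= v j) -> (forall j, 0 <= u j) -> 0 < \sum_j powR (v j) a ->
  \sum_j powR (u j) a = powR rho a ->
  \sum_j F a (rho / powR (\sum_j powR (v j) a) a^-1 * v j) (v j)
   <= \sum_j F a (u j) (v j).
Proof.
move=> a1 rho0 v0 u0 S0 Su.
have Sl := @row_sum_lam n a rho v a1 rho0 v0 S0.
set S := \sum_j _ in S0 Sl *.
set lam := rho / powR S a^-1 in Sl *.
have a0 : a != 0 by apply/eqP; lra.
have ag0 : 0 < a by lra.
have pS : 0 < powR S a^-1 by rewrite powR_gt0.
have lam0 : 0 < lam by rewrite divr_gt0.
have sumF (w : 'I_n -> R) : \sum_j F a (w j) (v j) =
   (\sum_j powR (w j) a) / (a * (a - 1)) - (\sum_j w j * powR (v j) (a - 1)) / (a - 1)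
   + S / a.
  rewrite /F !big_split /= sumrN -!mulr_suml.
  by [].
rewrite !sumF Su Sl.
suff H : \sum_j u j * powR (v j) (a - 1) <= \sum_j lam * v j * powR (v j) (a - 1).
  have b0 : 0 < (a - 1)^-1 by rewrite invr_gt0; lra.
  rewrite lerD2r lerD2l lerN2 ler_pM2r //.
have -> : \sum_j lam * v j * powR (v j) (a - 1) = lam * S.
  rewrite /S mulr_sumr; apply: eq_bigr => j _.
  by rewrite -mulrA; congr (_ * _); apply: mulr_powRB1 => //; lra.
(* Young *)
have b1 : 0 < a - 1 by lra.
have lb : 0 < powR lam (a - 1) by rewrite powR_gt0.
rewrite -(ler_pM2l lb).
have -> : powR lam (a - 1) * (lam * S) = powR rho a.
  rewrite mulrA [powR lam _ * lam]mulrC mulr_powRB1 ?ltW //.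
  by rewrite /lam pow_lam // divfK // gt_eqF.
have Y : forall j, u j * powR (lam * v j) (a - 1) <=
    powR (u j) a / a + powR (lam * v j) a / (a / (a - 1)).
  move=> j.
  have -> : powR (lam * v j) a = powR (powR (lam * v j) (a - 1)) (a / (a - 1)).
    by rewrite -powRrM [(_ - 1) * _]mulrC divfK // gt_eqF.
  apply: conjugate_powR => //; first by rewrite powR_ge0.
  - by rewrite divr_gt0 //; lra.
  - rewrite invf_div; field; by rewrite a0.
have hh : \sum_j u j * powR (lam * v j) (a - 1) <=
    \sum_j (powR (u j) a / a + powR (lam * v j) a / (a / (a - 1))).
  by apply: ler_sum => j _; exact: Y j.
rewrite big_split /= -!mulr_suml Su Sl in hh.
rewrite mulr_sumr; apply: (le_trans _ (le_trans hh _)).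
  by apply: ler_sum => j _; rewrite (powRM _ (ltW lam0) (v0 j)) mulrCA.
rewrite invf_div le_eqVlt; apply/orP; left; apply/eqP.
have a1' : a - 1 != 0 by apply/eqP; lra.
field; by rewrite a0.
Qed.


Lemma sum_pos n (a : R) (v : 'I_n -> R) : 0 < a -> (forall j, 0 <= v j) ->
  (exists j, v j != 0) -> 0 < \sum_j powR (v j) a.
Proof.
move=> a0 v0 [j vj].
rewrite (bigD1 j) //=; apply: ltr_pwDl.
  by rewrite powR_gt0 // lt_neqAle eq_sym vj v0.
by apply: sumr_ge0 => k _; rewrite powR_ge0.
Qed.

Lemma partA n (a : R) (r : 'cV[R]_n) (P0 Q : 'M[R]_n) : 1 < a ->
  (forall i, 0 < r i 0) -> (forall i j, 0 <= P0 i j) ->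
  (forall i, 0 < \sum_j powR (P0 i j) a) ->
  (forall i j, Q i j = r i 0 / powR (\sum_j powR (P0 i j) a) a^-1 * P0 i j) ->
  (forall i j, 0 <= Q i j) /\ (forall i, \sum_j powR (Q i j) a = powR (r i 0) a) /\
  forall P : 'M[R]_n, (forall i j, 0 <= P i j) ->
    (forall i, \sum_j powR (P i j) a = powR (r i 0) a) ->
    \sum_i \sum_j F a (Q i j) (P0 i j) <= \sum_i \sum_j F a (P i j) (P0 i j).
Proof.
move=> a1 r0 P00 S0 QE.
have ag0 : 0 < a by lra.
split; [|split].
- move=> i j; rewrite QE; apply: mulr_ge0 => //.
  by rewrite divr_ge0 ?powR_ge0 ?ltW.
- move=> i; under eq_bigr => j _ do rewrite QE.
  exact: (@row_sum_lam n a (r i 0) (fun j => P0 i j) a1 (r0 i) (P00 i) (S0 i)).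
- move=> P P0n PE; apply: ler_sum => i _.
  under eq_bigr => j _ do rewrite QE.
  exact: (@row_opt n a (r i 0) (fun j => P i j) (fun j => P0 i j) a1 (r0 i)
            (P00 i) (P0n i) (S0 i) (PE i)).
Qed.

Lemma cons_eq n (P : 'M[R]_n) (a : R) (r : 'cV[R]_n) :
  (mpow P a *m (const_mx 1 : 'cV[R]_n) = mpow r a) <->
  (forall i, \sum_j powR (P i j) a = powR (r i 0) a).
Proof.
split.
- move=> H i; have := congr1 (fun M : 'cV[R]_n => M i 0) H; rewrite !mxE => <-.
  by apply: eq_bigr => j _; rewrite !mxE mulr1.
- move=> H; apply/matrixP => i k; rewrite (ord1 k) !mxE -H.
  by apply: eq_bigr => j _; rewrite !mxE mulr1.
Qed.

Lemma cons_eqT n (P : 'M[R]_n) (a : R) (r : 'cV[R]_n) :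
  ((mpow P a)^T *m (const_mx 1 : 'cV[R]_n) = mpow r a) <->
  (forall i, \sum_j powR (P^T i j) a = powR (r i 0) a).
Proof.
have -> : (mpow P a)^T = mpow P^T a by apply/matrixP => i j; rewrite !mxE.
exact: cons_eq.
Qed.

Lemma mu_eq n (P : 'M[R]_n) (a b : R) i :
  mpow (mpow P a *m (const_mx 1 : 'cV[R]_n)) b i 0 =
  powR (\sum_j powR (P i j) a) b.
Proof.
rewrite !mxE; congr powR; by apply: eq_bigr => j _; rewrite !mxE mulr1.
Qed.

Lemma Dt_eq (t : R) n (P P0 : 'M[R]_n) : 0 <= t -> t < 1 ->
  (forall i j, 0 <= P i j) -> (forall i j, 0 <= P0 i j) ->
  Dt t P P0 = \sum_i \sum_j F (2 - t) (P i j) (P0 i j).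
Proof.
move=> t0 t1 Pn P0n; rewrite /Dt; apply: eq_bigr => i _; apply: eq_bigr => j _.
exact: term_eq.
Qed.

Lemma Dt_tr (t : R) n (P P0 : 'M[R]_n) : 0 <= t -> t < 1 ->
  (forall i j, 0 <= P i j) -> (forall i j, 0 <= P0 i j) ->
  Dt t P P0 = \sum_i \sum_j F (2 - t) (P^T i j) (P0^T i j).
Proof.
move=> t0 t1 Pn P0n; rewrite Dt_eq // exchange_big /=.
by apply: eq_bigr => i _; apply: eq_bigr => j _; rewrite !mxE.
Qed.

Lemma row_nz n (P : 'M[R]_n) i : row i P != 0 -> exists j, P i j != 0.
Proof.
move=> H; case: (pickP (fun j => P i j != 0)) => [j Hj|H0]; first by exists j.
exfalso; move/eqP: H; apply; apply/matrixP => k j.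
by rewrite !mxE; apply/eqP; move: (H0 j) => /= /negbFE.
Qed.

Lemma col_nz n (P : 'M[R]_n) j : col j P != 0 -> exists i, P^T j i != 0.
Proof.
move=> H; case: (pickP (fun i => P i j != 0)) => [i Hi|H0].
  by exists i; rewrite mxE.
exfalso; move/eqP: H; apply; apply/matrixP => i k.
by rewrite !mxE; apply/eqP; move: (H0 i) => /= /negbFE.
Qed.

Lemma xi_eq n (P : 'M[R]_n) (a b : R) i :
  mpow ((mpow P a)^T *m (const_mx 1 : 'cV[R]_n)) b i 0 =
  powR (\sum_j powR (P^T i j) a) b.
Proof.
have -> : (mpow P a)^T = mpow P^T a by apply/matrixP => k j; rewrite !mxE.
exact: mu_eq.
Qed.

End H.
Unset Implicit Arguments.

Theorem theorem4 (R : realType) (n : nat) (t : R) (r c : 'cV[R]_n)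
    (P0 : 'M[R]_n) :
  0 <= t -> t < 1 ->
  cosimplex t r -> (forall i, 0 < r i 0) ->
  cosimplex t c -> (forall i, 0 < c i 0) ->
  nonneg_mx P0 ->
  (* (a) row projection *)
  ((forall i, row i P0 != 0) ->
   let mu := mpow (mpow P0 (tstar t)^-1 *m (const_mx 1 : 'cV[R]_n)) (tstar t) in
   is_argmin
     (fun P : 'M[R]_n => nonneg_mx P /\
        mpow P (tstar t)^-1 *m (const_mx 1 : 'cV[R]_n) = mpow r (tstar t)^-1)
     (fun P => Dt t P P0)
     (diag_mx (\row_i (r i 0 / mu i 0)) *m P0))
  /\
  (* (b) column projection *)
  ((forall j, col j P0 != 0) ->
   let xi := mpow ((mpow P0 (tstar t)^-1)^T *m (const_mx 1 : 'cV[R]_n)) (tstar t) in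
   is_argmin
     (fun P : 'M[R]_n => nonneg_mx P /\
        (mpow P (tstar t)^-1)^T *m (const_mx 1 : 'cV[R]_n) = mpow c (tstar t)^-1)
     (fun P => Dt t P P0)
     (P0 *m diag_mx (\row_j (c j 0 / xi j 0)))).
Proof.
move=> t0 t1 _ r0 _ c0 P0n.
have a1 : 1 < 2 - t by lra.
have ag0 : 0 < 2 - t by lra.
split.
- move=> Hrow mu.
  have S0 : forall i, 0 < \sum_j powR (P0 i j) (2 - t).
    by move=> i; apply: (sum_pos _ _ _ ag0 (P0n i) (row_nz _ _ _ (Hrow i))).
  have QE : forall i j, (diag_mx (\row_i (r i 0 / mu i 0)) *m P0) i j =
      r i 0 / powR (\sum_j powR (P0 i j) (2 - t)) (2 - t)^-1 * P0 i j.
    move=> i j; rewrite mul_diag_mx !mxE /tstar; congr (_ / powR _ _ * _).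
    by apply: eq_bigr => k _; rewrite !mxE mulr1 invrK.
  have [Qn [Qc Qopt]] := partA _ _ _ _ (diag_mx (\row_i (r i 0 / mu i 0)) *m P0)
     a1 r0 P0n S0 QE.
  split.
    split; first exact: Qn.
    by apply/cons_eq; rewrite /tstar invrK.
  move=> P [Pn /cons_eq]; rewrite /tstar invrK => Pc.
  rewrite !Dt_eq //; exact: Qopt.
- move=> Hcol xi.
  set Qm := P0 *m _.
  have P0Tn : forall i j, 0 <= P0^T i j by move=> i j; rewrite mxE.
  have S0 : forall i, 0 < \sum_j powR (P0^T i j) (2 - t).
    by move=> i; apply: (sum_pos _ _ _ ag0 (P0Tn i) (col_nz _ _ _ (Hcol i))).
  have QE : forall i j, Qm^T i j =
      c i 0 / powR (\sum_j powR (P0^T i j) (2 - t)) (2 - t)^-1 * P0^T i j.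
    move=> i j; rewrite /Qm mxE mul_mx_diag !mxE /tstar mulrC; congr (_ / powR _ _ * _).
    by apply: eq_bigr => k _; rewrite !mxE mulr1 invrK.
  have [Qn [Qc Qopt]] := partA _ _ _ _ Qm^T a1 c0 P0Tn S0 QE.
  have Qmn : forall i j, 0 <= Qm i j by move=> i j; move: (Qn j i); rewrite mxE.
  split.
    split; first exact: Qmn.
    by apply/cons_eqT; rewrite /tstar invrK.
  move=> P [Pn /cons_eqT]; rewrite /tstar invrK => Pc.
  rewrite !Dt_tr //; apply: Qopt => // i j; rewrite mxE; exact: Pn.
Qed.
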